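(* Let $X$ be a finite set and let $c$ be a choice correspondence on $X$. If $c$ is rational, then $r^{c}(A)=c(A)$ for every menu $A$.
   Context: A menu is a nonempty subset of $X$. A choice correspondence is a map $c$ assigning to each menu $A$ a nonempty subset $c(A)\subseteq A$. A weak order is a complete and transitive binary relation on $X$. For a weak order $R$ and menu $A$, $\max(A,R)=\{x\in A: xRy \text{ for all } y\in A\}$. The choice correspondence $c$ is rational if there exists a weak order $R$ on $X$ with $c(A)=\max(A,R)$ for every menu $A$. For a menu $A$, $r^{c}(A)=\{x\in A: c(A\setminus\{x\})\neq c(A)\}$ (with the convention that for a singleton $A=\{x\}$ the removal of $x$ counts as changing the choice, so $r^c(\{x\})=\{x\}$; in particular $c(A)\subseteq r^c(A)$ always). *)

(* Defs.v *)
From mathcomp Require Import all_boot.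
Set Implicit Arguments. Unset Strict Implicit. Unset Printing Implicit Defensive.

Definition choice_corr (X : finType) (c : {set X} -> {set X}) : Prop :=
  forall A : {set X}, A != set0 -> (c A \subset A) /\ (c A != set0).

Definition weak_order (X : finType) (R : rel X) : Prop :=
  (forall x y, R x y || R y x) /\ transitive R.

Definition maxR (X : finType) (A : {set X}) (R : rel X) : {set X} :=
  [set x in A | [forall y in A, R x y]].

Definition rational (X : finType) (c : {set X} -> {set X}) : Prop :=
  exists R : rel X, weak_order R /\
    forall A : {set X}, A != set0 -> c A = maxR A R.

(* r^c(A): elements whose removal changes the choice; removing the
   element of a singleton menu counts as a change. *)
Definition rc (X : finType) (c : {set X} -> {set X}) (A : {set X}) : {set X} :=
  [set x in A | (A :\ x == set0) || (c (A :\ x) != c A)].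

(* Main.v *)
Require Import Defs.
From mathcomp Require Import all_boot.

Theorem lemma3 (X : finType) (c : {set X} -> {set X}) :
  choice_corr c -> rational c ->
  forall A : {set X}, A != set0 -> rc c A = c A.
Proof.
move=> hc [R [[Rtot Rtr] hR]] A hA.
have Rrefl : forall x, R x x by move=> x; have := Rtot x x; rewrite orbb.
have [_ cA0] := hc A hA.
rewrite /rc (hR A hA); apply/setP => x; rewrite !inE.
case xA: (x \in A) => //=.
case: (boolP (A :\ x == set0)) => [/eqP e|ne] /=.
  apply/esym/forallP => y; apply/implyP => yA.
  case: (eqVneq y x) => [->//|yx].
  have : y \in A :\ x by rewrite !inE yx.
  by rewrite e in_set0.
rewrite (hR _ ne).
case: (boolP [forall y in A, R x y]) => [mx|nmx].
  apply/negP => /eqP/setP/(_ x); rewrite /maxR !inE eqxx xA mx /=.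
  by [].
apply/negbTE; rewrite negbK.
have [z zc] := set0Pn _ cA0.
move: zc; rewrite (hR A hA) inE => /andP[zA /forallP zm].
have zx : z != x by apply/eqP => e; move: nmx; rewrite -e; apply/negP; rewrite negbK; apply/forallP.
apply/eqP/setP => y; rewrite !inE.
case: (eqVneq y x) => [->|yx] /=; first by rewrite (negbTE nmx) andbF.
case yA: (y \in A) => //=.
apply/forallP/forallP => H w; apply/implyP => wA.
- case: (eqVneq w x) => [->|wx].
    have := H z; rewrite !inE zx zA /= => Ryz.
    by have := zm x; rewrite xA /= => Rzx; apply: Rtr Rzx.
  by have := H w; rewrite !inE wx wA.
- move: wA; rewrite !inE => /andP[_ wA].
  by have := H w; rewrite wA.
Qed.
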